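(* Let $c>0$, $0<q_1<q_2<1$, $a,b\in\mathbb{R}$, and let $\Delta(s)=s^{q_1+q_2}+as^{q_2}+bs^{q_1}+c$, with principal values of the complex power functions. 1. If $a+1>0$, $a+b>0$ and $b+c>0$, then all roots of $\Delta(s)$ lie in the open left half-plane, regardless of $q_1$ and $q_2$. 2. If $a+b+c+1\le 0$, then $\Delta(s)$ has at least one positive real root, regardless of $q_1$ and $q_2$.
   Context: Principal value: $s^{q}=|s|^q e^{iq\arg(s)}$ with $\arg(s)\in(-\pi,\pi]$. *)

(* Defs.v *)
From Stdlib Require Import Reals.
From Coquelicot Require Import Coquelicot.
Open Scope R_scope.

(* Principal argument arg(s) in (-PI, PI] (the usual atan2); arg 0 := 0. *)
Definition carg (z : C) : R :=
  let x := Re z in let y := Im z in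
  if Rlt_dec 0 x then atan (y / x)
  else if Rlt_dec x 0 then
    (if Rle_dec 0 y then atan (y / x) + PI else atan (y / x) - PI)
  else
    if Rlt_dec 0 y then PI / 2
    else if Rlt_dec y 0 then - (PI / 2) else 0.

Definition cpow (s : C) (q : R) : C :=
  if Req_EM_T (Cmod s) 0 then 0%C
  else Cmult (RtoC (Rpower (Cmod s) q))
             (cos (q * carg s), sin (q * carg s)).

Definition charDelta (q1 q2 a b c : R) (s : C) : C :=
  Cplus (Cplus (Cplus (cpow s (q1 + q2)) (Cmult (RtoC a) (cpow s q2)))
               (Cmult (RtoC b) (cpow s q1)))
        (RtoC c).

(* Main.v *)
Require Import Defs.
From Stdlib Require Import Reals Lra Psatz.
From Coquelicot Require Import Coquelicot.
Open Scope R_scope.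

Lemma exp_le_mono x y : x <= y -> exp x <= exp y.
Proof. intros H; destruct (Rle_lt_or_eq_dec _ _ H) as [h|h].
  left; apply exp_increasing; auto. subst; lra. Qed.

Lemma amgm x b : 0 < x -> 0 < b < 1 -> Rpower x b <= b * x + (1 - b).
Proof.
  intros Hx Hb. set (L := ln x).
  assert (Ex : x = exp L) by (unfold L; rewrite exp_ln; auto).
  unfold Rpower. fold L. set (E := exp (b * L)).
  assert (HE : 0 < E) by apply exp_pos.
  assert (h1 : x = E * exp ((1 - b) * L)).
  { rewrite Ex; unfold E; rewrite <- exp_plus; f_equal; ring. }
  assert (h2 : 1 = E * exp (- (b * L))).
  { unfold E; rewrite <- exp_plus; replace (b * L + - (b * L)) with 0 by ring; now rewrite exp_0. }
  pose proof (exp_ineq1_le ((1 - b) * L)) as i1.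
  pose proof (exp_ineq1_le (- (b * L))) as i2.
  assert (x >= E * (1 + (1 - b) * L)) by (rewrite h1; nra).
  assert (1 >= E * (1 + - (b * L))) by (rewrite h2 at 1; nra).
  nra.
Qed.

Lemma chord x y z : 0 <= x -> x < y -> y < z -> z <= PI ->
  (z - y) * sin x + (y - x) * sin z <= (z - x) * sin y.
Proof.
  intros. 
  destruct (MVT_cor2 sin cos x y) as [c1 [e1 b1]]; auto.
  { intros; apply derivable_pt_lim_sin. }
  destruct (MVT_cor2 sin cos y z) as [c2 [e2 b2]]; auto.
  { intros; apply derivable_pt_lim_sin. }
  assert (cos c2 < cos c1) by (apply cos_decreasing_1; lra).
  assert ((z - x) * sin y - ((z - y) * sin x + (y - x) * sin z)
     = (z - y) * (y - x) * (cos c1 - cos c2)) by nra.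
  assert (0 <= (z - y) * (y - x) * (cos c1 - cos c2)).
  { apply Rmult_le_pos; [apply Rmult_le_pos|]; lra. }
  lra.
Qed.

Lemma I1 q1 q2 t : 0 < q1 -> q1 < q2 -> q2 < 1 -> 0 < t <= PI / 2 ->
  q1 * sin (q2 * t) <= q2 * sin (q1 * t).
Proof.
  intros. pose proof PI_RGT_0.
  pose proof (chord 0 (q1 * t) (q2 * t)) as h.
  rewrite sin_0 in h.
  assert (hh : (q2 * t - 0) * sin (q1 * t) >= (q1 * t - 0) * sin (q2 * t)).
  { assert (q1 * t < q2 * t) by nra. assert (q2 * t <= PI) by nra.
    assert (0 < q1 * t) by nra. specialize (h ltac:(lra) ltac:(lra) ltac:(lra) ltac:(lra)). lra. }
  nra.
Qed.

Lemma I2 q1 q2 t : 0 < q1 -> q1 < q2 -> q2 < 1 -> 0 < t <= PI / 2 ->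
  (q2 - q1) * sin (q2 * t) <= q2 * sin ((q1 + q2) * t).
Proof.
  intros. pose proof PI_RGT_0.
  pose proof (chord (q2 * t) ((q1 + q2) * t) PI) as h.
  rewrite sin_PI in h.
  assert (0 < q2 * t) by nra. assert ((q1+q2) * t < PI) by nra.
  assert (q2 * t < (q1 + q2) * t) by nra.
  specialize (h ltac:(lra) ltac:(lra) ltac:(lra) ltac:(lra)).
  assert (0 <= sin (q2 * t)) by (left; apply sin_gt_0; lra).
  assert (q2 * (PI - q2 * t) * sin ((q1 + q2) * t) >= (q2 - q1) * (PI - q2 * t) * sin (q2 * t)).
  { assert (q2 * (PI - (q1 + q2) * t) * sin (q2 * t) >= (q2 - q1) * (PI - q2 * t) * sin (q2 * t)).
    { assert (q2 * (PI - (q1 + q2) * t) - (q2 - q1) * (PI - q2 * t) = q1 * (PI - 2 * q2 * t)) by ring.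
      assert (0 <= q1 * (PI - 2 * q2 * t)) by nra. nra. }
    nra. }
  assert (0 < PI - q2 * t) by lra.
  nra.
Qed.

Lemma Rpower_pos x q : 0 < Rpower x q.
Proof. apply exp_pos. Qed.

Lemma LA r q1 q2 t : 0 < r -> 0 < q1 -> q1 < q2 -> q2 < 1 -> 0 < t <= PI / 2 ->
  Rpower r q2 * sin (q2 * t) <=
  Rpower r q1 * Rpower r q2 * sin ((q1 + q2) * t) + Rpower r q1 * sin (q1 * t).
Proof.
  intros. pose proof (I1 q1 q2 t) as i1. pose proof (I2 q1 q2 t) as i2.
  specialize (i1 ltac:(lra) ltac:(lra) ltac:(lra) ltac:(lra)).
  specialize (i2 ltac:(lra) ltac:(lra) ltac:(lra) ltac:(lra)).
  set (R1 := Rpower r q1). set (R2 := Rpower r q2). set (P := Rpower r (q2 - q1)).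
  assert (hP : R2 = R1 * P).
  { unfold R1, R2, P; rewrite <- Rpower_plus; f_equal; ring. }
  assert (hP2 : P = Rpower R2 ((q2 - q1) / q2)).
  { unfold P, R2; rewrite Rpower_mult; f_equal; field; lra. }
  pose proof (amgm R2 ((q2 - q1) / q2) (Rpower_pos _ _)) as am.
  rewrite <- hP2 in am.
  assert (am' : q2 * P <= (q2 - q1) * R2 + q1).
  { assert (0 < (q2 - q1) / q2 < 1).
    { split. apply Rdiv_lt_0_compat; lra. apply Rmult_lt_reg_r with q2; [lra|].
      unfold Rdiv; rewrite Rmult_assoc, Rinv_l; lra. }
    specialize (am H4).
    replace ((q2 - q1) / q2 * R2 + (1 - (q2 - q1) / q2)) with (((q2 - q1) * R2 + q1) / q2) in am by (field; lra).
    apply Rmult_le_reg_r with (/ q2). apply Rinv_0_lt_compat; lra.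
    replace (q2 * P * / q2) with P by (field; lra). exact am. }
  assert (HR1 : 0 < R1) by apply Rpower_pos. assert (HR2 : 0 < R2) by apply Rpower_pos.
  assert (0 < sin (q2 * t)). { apply sin_gt_0; pose proof PI_RGT_0; nra. }
  assert (q2 * (R2 * sin (q2 * t)) <= q2 * (R1 * R2 * sin ((q1 + q2) * t) + R1 * sin (q1 * t))).
  { rewrite hP at 1.
    assert (q2 * (R1 * P * sin (q2 * t)) = R1 * sin (q2 * t) * (q2 * P)) by ring.
    assert (R1 * sin (q2 * t) * (q2 * P) <= R1 * sin (q2 * t) * ((q2 - q1) * R2 + q1)).
    { apply Rmult_le_compat_l; [|exact am']. nra. }
    assert (R1 * R2 * ((q2 - q1) * sin (q2 * t)) <= R1 * R2 * (q2 * sin ((q1 + q2) * t))) by (apply Rmult_le_compat_l; nra).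
    assert (R1 * (q1 * sin (q2 * t)) <= R1 * (q2 * sin (q1 * t))) by (apply Rmult_le_compat_l; nra).
    nra. }
  nra.
Qed.

Lemma LB r q1 q2 t : 0 < r -> 0 < q1 -> q1 < q2 -> q2 < 1 -> 0 < t <= PI / 2 ->
  Rpower r q1 * sin (q2 * t) <=
  Rpower r q2 * sin (q1 * t) + sin ((q1 + q2) * t).
Proof.
  intros. pose proof (I1 q1 q2 t) as i1. pose proof (I2 q1 q2 t) as i2.
  specialize (i1 ltac:(lra) ltac:(lra) ltac:(lra) ltac:(lra)).
  specialize (i2 ltac:(lra) ltac:(lra) ltac:(lra) ltac:(lra)).
  set (R1 := Rpower r q1). set (R2 := Rpower r q2).
  assert (hP2 : R1 = Rpower R2 (q1 / q2)).
  { unfold R1, R2; rewrite Rpower_mult; f_equal; field; lra. }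
  pose proof (amgm R2 (q1 / q2) (Rpower_pos _ _)) as am.
  rewrite <- hP2 in am.
  assert (am' : q2 * R1 <= q1 * R2 + (q2 - q1)).
  { assert (0 < q1 / q2 < 1).
    { split. apply Rdiv_lt_0_compat; lra. apply Rmult_lt_reg_r with q2; [lra|].
      unfold Rdiv; rewrite Rmult_assoc, Rinv_l; lra. }
    specialize (am H4).
    replace (q1 / q2 * R2 + (1 - q1 / q2)) with ((q1 * R2 + (q2 - q1)) / q2) in am by (field; lra).
    apply Rmult_le_reg_r with (/ q2). apply Rinv_0_lt_compat; lra.
    replace (q2 * R1 * / q2) with R1 by (field; lra). exact am. }
  assert (HR1 : 0 < R1) by apply Rpower_pos. assert (HR2 : 0 < R2) by apply Rpower_pos.
  assert (0 < sin (q2 * t)). { apply sin_gt_0; pose proof PI_RGT_0; nra. }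
  assert (q2 * (R1 * sin (q2 * t)) <= q2 * (R2 * sin (q1 * t) + sin ((q1 + q2) * t))).
  { assert (q2 * (R1 * sin (q2 * t)) = sin (q2 * t) * (q2 * R1)) by ring.
    assert (sin (q2 * t) * (q2 * R1) <= sin (q2 * t) * (q1 * R2 + (q2 - q1))).
    { apply Rmult_le_compat_l; [lra|exact am']. }
    assert (R2 * (q1 * sin (q2 * t)) <= R2 * (q2 * sin (q1 * t))) by (apply Rmult_le_compat_l; nra).
    nra. }
  nra.
Qed.

Lemma main_pos r q1 q2 a b c t : 0 < r -> 0 < q1 -> q1 < q2 -> q2 < 1 -> 0 < c ->
  0 < a + 1 -> 0 < a + b -> 0 < b + c -> 0 < t <= PI / 2 ->
  Rpower r q1 * Rpower r q2 * cos ((q1 + q2) * t) + a * Rpower r q2 * cos (q2 * t)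
    + b * Rpower r q1 * cos (q1 * t) + c = 0 ->
  Rpower r q1 * Rpower r q2 * sin ((q1 + q2) * t) + a * Rpower r q2 * sin (q2 * t)
    + b * Rpower r q1 * sin (q1 * t) = 0 -> False.
Proof.
  intros. pose proof PI_RGT_0.
  pose proof (LA r q1 q2 t ltac:(lra) ltac:(lra) ltac:(lra) ltac:(lra) ltac:(lra)) as la.
  pose proof (LB r q1 q2 t ltac:(lra) ltac:(lra) ltac:(lra) ltac:(lra) ltac:(lra)) as lb.
  set (R1 := Rpower r q1) in *. set (R2 := Rpower r q2) in *.
  assert (HR1 : 0 < R1) by apply Rpower_pos. assert (HR2 : 0 < R2) by apply Rpower_pos.
  assert (S1 : 0 < sin (q1 * t)) by (apply sin_gt_0; nra).
  assert (S2 : 0 < sin (q2 * t)) by (apply sin_gt_0; nra).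
  assert (S3 : 0 < sin ((q1 + q2) * t)) by (apply sin_gt_0; nra).
  destruct (Rlt_or_le a 0) as [ha|ha].
  - assert (0 < (1 + a) * (R1 * R2 * sin ((q1 + q2) * t)) + (a + b) * (R1 * sin (q1 * t))
       + (- a) * (R1 * R2 * sin ((q1 + q2) * t) + R1 * sin (q1 * t) - R2 * sin (q2 * t))).
    { assert (0 < (1 + a) * (R1 * R2 * sin ((q1 + q2) * t))) by (apply Rmult_lt_0_compat; [lra| apply Rmult_lt_0_compat; nra]).
      assert (0 < (a + b) * (R1 * sin (q1 * t))) by (apply Rmult_lt_0_compat; nra).
      assert (0 <= (- a) * (R1 * R2 * sin ((q1 + q2) * t) + R1 * sin (q1 * t) - R2 * sin (q2 * t))) by (apply Rmult_le_pos; lra).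
      lra. }
    nra.
  - destruct (Rlt_or_le b 0) as [hb|hb].
    + assert (E : sin ((q1 + q2) * t) * (R1 * R2 * cos ((q1 + q2) * t) + a * R2 * cos (q2 * t)
           + b * R1 * cos (q1 * t) + c) - cos ((q1 + q2) * t) * (R1 * R2 * sin ((q1 + q2) * t) + a * R2 * sin (q2 * t)
           + b * R1 * sin (q1 * t)) = a * R2 * sin (q1 * t) + b * R1 * sin (q2 * t) + c * sin ((q1 + q2) * t)).
      { assert (e1 : sin (q1 * t) = sin ((q1 + q2) * t) * cos (q2 * t) - cos ((q1 + q2) * t) * sin (q2 * t))
          by (rewrite <- sin_minus; f_equal; ring).
        assert (e2 : sin (q2 * t) = sin ((q1 + q2) * t) * cos (q1 * t) - cos ((q1 + q2) * t) * sin (q1 * t))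
          by (rewrite <- sin_minus; f_equal; ring).
        rewrite e1 at 2. rewrite e2 at 3. ring. }
      rewrite H8, H9 in E.
      assert (0 < (a + b) * (R2 * sin (q1 * t)) + (c + b) * sin ((q1 + q2) * t)
         + (- b) * (R2 * sin (q1 * t) + sin ((q1 + q2) * t) - R1 * sin (q2 * t))).
      { assert (0 < (a + b) * (R2 * sin (q1 * t))) by (apply Rmult_lt_0_compat; nra).
        assert (0 < (c + b) * sin ((q1 + q2) * t)) by (apply Rmult_lt_0_compat; nra).
        assert (0 <= (- b) * (R2 * sin (q1 * t) + sin ((q1 + q2) * t) - R1 * sin (q2 * t))) by (apply Rmult_le_pos; lra).
        lra. }
      nra.
    + assert (0 < R1 * R2 * sin ((q1 + q2) * t)) by (apply Rmult_lt_0_compat; nra).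
      assert (0 <= a * R2 * sin (q2 * t)) by (apply Rmult_le_pos; nra).
      assert (0 <= b * R1 * sin (q1 * t)) by (apply Rmult_le_pos; nra).
      lra.
Qed.

Lemma Rpower_le_exp_small r p q : 0 < r <= 1 -> p <= q -> Rpower r q <= Rpower r p.
Proof.
  intros. unfold Rpower. apply exp_le_mono.
  assert (ln r <= 0) by (rewrite <- ln_1; apply ln_le; lra). nra.
Qed.

Lemma main_zero r q1 q2 a b c : 0 < r -> 0 < q1 -> q1 < q2 -> 0 < c ->
  0 < a + 1 -> 0 < a + b -> 0 < b + c ->
  Rpower r q1 * Rpower r q2 + a * Rpower r q2 + b * Rpower r q1 + c = 0 -> False.
Proof.
  intros.
  assert (HR1 : 0 < Rpower r q1) by apply Rpower_pos. assert (HR2 : 0 < Rpower r q2) by apply Rpower_pos.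
  destruct (Rle_or_lt r 1) as [hr|hr].
  - assert (Rpower r q2 <= Rpower r q1) by (apply Rpower_le_exp_small; lra).
    assert (Rpower r q1 <= 1) by (rewrite <- (Rpower_O r) by lra; apply Rpower_le_exp_small; lra).
    destruct (Rlt_or_le a 0); destruct (Rlt_or_le b 0); nra.
  - assert (Rpower r q1 <= Rpower r q2) by (apply Rle_Rpower; lra).
    assert (1 <= Rpower r q1) by (rewrite <- (Rpower_O r) by lra; apply Rle_Rpower; lra).
    destruct (Rlt_or_le a 0); destruct (Rlt_or_le b 0); nra.
Qed.

Lemma main_all r q1 q2 a b c t : 0 < r -> 0 < q1 -> q1 < q2 -> q2 < 1 -> 0 < c ->
  0 < a + 1 -> 0 < a + b -> 0 < b + c -> - (PI / 2) <= t <= PI / 2 ->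
  Rpower r q1 * Rpower r q2 * cos ((q1 + q2) * t) + a * Rpower r q2 * cos (q2 * t)
    + b * Rpower r q1 * cos (q1 * t) + c = 0 ->
  Rpower r q1 * Rpower r q2 * sin ((q1 + q2) * t) + a * Rpower r q2 * sin (q2 * t)
    + b * Rpower r q1 * sin (q1 * t) = 0 -> False.
Proof.
  intros.
  destruct (Rtotal_order t 0) as [h|[h|h]].
  - apply (main_pos r q1 q2 a b c (- t)); try lra.
    + rewrite <- H8. rewrite <- !Ropp_mult_distr_r, !cos_neg. ring.
    + rewrite <- !Ropp_mult_distr_r, !sin_neg. lra.
  - subst t. rewrite !Rmult_0_r, !cos_0 in H8.
    apply (main_zero r q1 q2 a b c); try lra.
  - apply (main_pos r q1 q2 a b c t); lra.
Qed.

Lemma cpow_eq s q : Cmod s <> 0 -> cpow s q =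
  (Rpower (Cmod s) q * cos (q * carg s), Rpower (Cmod s) q * sin (q * carg s)).
Proof.
  intros h. unfold cpow. destruct (Req_EM_T (Cmod s) 0); [contradiction|].
  unfold Cmult, RtoC; simpl. f_equal; ring.
Qed.

Lemma cpow_0 s q : Cmod s = 0 -> cpow s q = 0%C.
Proof. intros h. unfold cpow. destruct (Req_EM_T (Cmod s) 0); [reflexivity|contradiction]. Qed.

Lemma carg_bound s : 0 <= Re s -> - (PI / 2) <= carg s <= PI / 2.
Proof.
  intros h. pose proof PI_RGT_0. unfold carg.
  destruct (Rlt_dec 0 (Re s)).
  - pose proof (atan_bound (Im s / Re s)). lra.
  - destruct (Rlt_dec (Re s) 0); [lra|].
    destruct (Rlt_dec 0 (Im s)); [lra|].
    destruct (Rlt_dec (Im s) 0); lra.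
Qed.

Lemma part1 q1 q2 a b c (hc : 0 < c) (hq1 : 0 < q1) (hq12 : q1 < q2) (hq2 : q2 < 1) :
  (0 < a + 1 /\ 0 < a + b /\ 0 < b + c) ->
     forall s : C, charDelta q1 q2 a b c s = 0%C -> Re s < 0.
Proof.
  intros [h1 [h2 h3]] s H.
  destruct (Rlt_or_le (Re s) 0) as [hs|hs]; [exact hs|exfalso].
  unfold charDelta in H.
  destruct (Req_EM_T (Cmod s) 0) as [e|e].
  - rewrite !(cpow_0 s) in H by exact e.
    apply (f_equal fst) in H. simpl in H. lra.
  - rewrite !(cpow_eq s) in H by exact e.
    pose proof (f_equal fst H) as Hr. pose proof (f_equal snd H) as Hi.
    simpl in Hr, Hi. rewrite Rpower_plus in Hr, Hi.
    pose proof (Cmod_ge_0 s).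
    apply (main_all (Cmod s) q1 q2 a b c (carg s)); try lra.
    apply carg_bound; lra.
Qed.

Lemma delta_real q1 q2 a b c x : 0 < x ->
  charDelta q1 q2 a b c (RtoC x) =
  RtoC (Rpower x (q1 + q2) + a * Rpower x q2 + b * Rpower x q1 + c).
Proof.
  intros hx.
  assert (hm : Cmod (RtoC x) = x) by (rewrite Cmod_R; apply Rabs_right; lra).
  assert (ha : carg (RtoC x) = 0).
  { unfold carg. simpl. destruct (Rlt_dec 0 x); [|lra].
    unfold Rdiv; rewrite Rmult_0_l; apply atan_0. }
  unfold charDelta. rewrite !cpow_eq by lra. rewrite hm, ha, !Rmult_0_r, cos_0, sin_0.
  unfold RtoC, Cplus, Cmult; simpl. f_equal; ring.
Qed.

Lemma cont_f q1 q2 a b c t : 0 < t ->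
  continuity_pt (fun x => - (Rpower x (q1+q2) + a * Rpower x q2 + b * Rpower x q1 + c)) t.
Proof.
  intros. apply continuity_pt_filterlim.
  apply (ex_derive_continuous (fun x => - (Rpower x (q1+q2) + a * Rpower x q2 + b * Rpower x q1 + c))).
  auto_derive.
  repeat split; eexists; apply is_derive_Reals; apply derivable_pt_lim_power; lra.
Qed.

Lemma part2 q1 q2 a b c (hc : 0 < c) (hq1 : 0 < q1) (hq12 : q1 < q2) (hq2 : q2 < 1) :
  (a + b + c + 1 <= 0 ->
     exists x : R, 0 < x /\ charDelta q1 q2 a b c (RtoC x) = 0%C).
Proof.
  intros h.
  set (f := fun x => Rpower x (q1+q2) + a * Rpower x q2 + b * Rpower x q1 + c).
  assert (f1 : f 1 = 1 + a + b + c).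
  { unfold f, Rpower. rewrite ln_1, !Rmult_0_r, exp_0. ring. }
  destruct (Req_dec (f 1) 0) as [e|e].
  { exists 1. split; [lra|]. rewrite delta_real by lra. change (RtoC (f 1) = 0%C). rewrite e. reflexivity. }
  set (K := 1 + Rabs a + Rabs b).
  assert (hK : 1 <= K) by (unfold K; pose proof (Rabs_pos a); pose proof (Rabs_pos b); lra).
  set (d := Rmin (1/2) (c / (2 * K))).
  assert (hd0 : 0 < d).
  { unfold d. apply Rmin_glb_lt; [lra|]. apply Rdiv_lt_0_compat; lra. }
  assert (hd1 : d < 1) by (unfold d; pose proof (Rmin_l (1/2) (c / (2 * K))); lra).
  assert (hd2 : K * d <= c / 2).
  { unfold d. pose proof (Rmin_r (1/2) (c / (2 * K))).
    apply Rle_trans with (K * (c / (2 * K))). apply Rmult_le_compat_l; lra.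
    right; field; lra. }
  set (e0 := Rpower d (1 / q1)).
  assert (he0 : 0 < e0) by apply exp_pos.
  assert (he1 : e0 < 1).
  { unfold e0, Rpower. apply Rlt_le_trans with (exp 0); [|rewrite exp_0; lra]. apply exp_increasing.
    assert (ln d < 0) by (rewrite <- ln_1; apply ln_increasing; lra).
    assert (0 < 1 / q1) by (apply Rdiv_lt_0_compat; lra).
    assert (0 < (1 / q1) * (- ln d)) by (apply Rmult_lt_0_compat; lra). lra. }
  assert (hq : Rpower e0 q1 = d).
  { unfold e0. rewrite Rpower_mult. replace (1 / q1 * q1) with 1 by (field; lra). apply Rpower_1; lra. }
  assert (hA : Rpower e0 q2 <= d) by (rewrite <- hq; apply Rpower_le_exp_small; lra).
  assert (hB : Rpower e0 (q1 + q2) <= d) by (rewrite <- hq; apply Rpower_le_exp_small; lra).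
  assert (pA : 0 < Rpower e0 q2) by apply exp_pos.
  assert (pB : 0 < Rpower e0 q1) by apply exp_pos.
  assert (pC : 0 < Rpower e0 (q1 + q2)) by apply exp_pos.
  assert (fe : 0 < f e0).
  { unfold f.
    assert (- Rabs a <= a) by (pose proof (Rle_abs (- a)); rewrite Rabs_Ropp in H; lra).
    assert (- Rabs b <= b) by (pose proof (Rle_abs (- b)); rewrite Rabs_Ropp in H0; lra).
    assert (- Rabs a * d <= a * Rpower e0 q2).
    { assert (0 <= (a + Rabs a) * Rpower e0 q2) by (apply Rmult_le_pos; lra).
      assert (Rabs a * Rpower e0 q2 <= Rabs a * d) by (apply Rmult_le_compat_l; [apply Rabs_pos|lra]).
      lra. }
    assert (- Rabs b * d <= b * Rpower e0 q1).
    { assert (0 <= (b + Rabs b) * Rpower e0 q1) by (apply Rmult_le_pos; lra).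
      assert (Rabs b * Rpower e0 q1 <= Rabs b * d) by (apply Rmult_le_compat_l; [apply Rabs_pos|lra]).
      lra. }
    unfold K in hd2. lra. }
  destruct (Ranalysis5.IVT_interv (fun x => - f x) e0 1) as [z [hz fz]].
  - intros t ht. apply cont_f. lra.
  - exact he1.
  - lra.
  - lra.
  - exists z. split; [lra|]. rewrite delta_real by lra. change (RtoC (f z) = 0%C).
    replace (f z) with 0 by lra. reflexivity.
Qed.

Theorem proposition2 (q1 q2 a b c : R)
  (hc : 0 < c) (hq1 : 0 < q1) (hq12 : q1 < q2) (hq2 : q2 < 1) :
  ((0 < a + 1 /\ 0 < a + b /\ 0 < b + c) ->
     forall s : C, charDelta q1 q2 a b c s = 0%C -> Re s < 0)
  /\
  (a + b + c + 1 <= 0 ->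
     exists x : R, 0 < x /\ charDelta q1 q2 a b c (RtoC x) = 0%C).
Proof.
  split; [apply part1 | apply part2]; assumption.
Qed.
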